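(* Let $n\ge 2$ and let $f:(\mathbb{C}^n,0)\to(\mathbb{C},0)$ be a holomorphic function germ with $f(0)=0$ having an isolated critical point at the origin, with Milnor number $\mu$ and Tjurina number $\tau$. If $\mu/\tau>n-1$, then $f^{n-1}\notin J_f$.
   Context: Let $S=\mathbb{C}\{x_1,\dots,x_n\}$ be the ring of convergent power series, $J_f=(\partial f/\partial x_1,\dots,\partial f/\partial x_n)\subset S$ the Jacobian ideal, $\mu=\dim_{\mathbb{C}}S/J_f$ and $\tau=\dim_{\mathbb{C}}S/(J_f,f)$. *)

(* Defs.v *)
From Stdlib Require Import Reals List Arith.
Import ListNotations.
Open Scope R_scope.

Record C := mkC { re : R; im : R }.
Definition C0 : C := mkC 0 0.
Definition C1 : C := mkC 1 0.
Definition Cadd (a b : C) : C := mkC (re a + re b) (im a + im b).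
Definition Copp (a : C) : C := mkC (- re a) (- im a).
Definition Cmul (a b : C) : C :=
  mkC (re a * re b - im a * im b) (re a * im b + im a * re b).
Definition Cabs (a : C) : R := sqrt (re a * re a + im a * im a).
Definition CofN (k : nat) : C := mkC (INR k) 0.
Definition Csum (l : list C) : C := fold_right Cadd C0 l.

(** A power series in n variables is its coefficient function; only the values
    at multi-indices of length n are meaningful. *)
Definition mindex := list nat.
Definition series := mindex -> C.

Definition mdeg (a : mindex) : nat := fold_right plus 0%nat a.

Fixpoint boxes (a : mindex) : list mindex :=
  match a with
  | [] => [[]]
  | k :: a' => flat_map (fun j => map (cons j) (boxes a')) (seq 0 (S k))
  end.

Fixpoint msub (a b : mindex) : mindex :=
  match a, b with
  | x :: a', y :: b' => (x - y)%nat :: msub a' b'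
  | _, _ => a
  end.

Definition is_zero_mi (a : mindex) : bool := forallb (Nat.eqb 0) a.

Fixpoint mincr (i : nat) (a : mindex) : mindex :=
  match a, i with
  | [], _ => []
  | x :: a', O => S x :: a'
  | x :: a', S i' => x :: mincr i' a'
  end.

Definition munit (n i : nat) : mindex := mincr i (repeat 0%nat n).

Definition sadd (f g : series) : series := fun a => Cadd (f a) (g a).
Definition sopp (f : series) : series := fun a => Copp (f a).
Definition sscale (c : C) (f : series) : series := fun a => Cmul c (f a).
Definition smul (f g : series) : series :=
  fun a => Csum (map (fun b => Cmul (f b) (g (msub a b))) (boxes a)).
Definition sone : series := fun a => if is_zero_mi a then C1 else C0.
Definition szero : series := fun _ => C0.
Fixpoint spow (f : series) (k : nat) : series :=
  match k with O => sone | S k' => smul f (spow f k') end.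

(** partial derivative d/dx_i (i counted from 0) *)
Definition sderiv (i : nat) (f : series) : series :=
  fun a => Cmul (CofN (S (nth i a 0%nat))) (f (mincr i a)).

Definition seq_eq (n : nat) (f g : series) : Prop :=
  forall a : mindex, length a = n -> f a = g a.

(** convergence: the series converges on some polydisc of radius r > 0,
    i.e. its coefficients satisfy a Cauchy estimate |a_alpha| r^|alpha| <= M *)
Definition convergent (n : nat) (f : series) : Prop :=
  exists M r : R, 0 < r /\
    forall a : mindex, length a = n -> Cabs (f a) * r ^ (mdeg a) <= M.

Definition in_ideal (n : nat) (gens : list series) (g : series) : Prop :=
  exists hs : list series,
    length hs = length gens /\ Forall (convergent n) hs /\
    seq_eq n g (fold_right sadd szero (map (fun p => smul (fst p) (snd p)) (combine hs gens))).

Definition lincomb (cs : list C) (es : list series) : series :=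
  fold_right sadd szero (map (fun p => sscale (fst p) (snd p)) (combine cs es)).

Definition quot_dim (n : nat) (gens : list series) (d : nat) : Prop :=
  exists es : list series,
    length es = d /\ Forall (convergent n) es /\
    (forall g, convergent n g ->
       exists cs : list C, length cs = d /\
         in_ideal n gens (sadd g (sopp (lincomb cs es)))) /\
    (forall cs : list C, length cs = d ->
       in_ideal n gens (lincomb cs es) -> Forall (fun c => c = C0) cs).

Definition jacobian_gens (n : nat) (f : series) : list series :=
  map (fun i => sderiv i f) (seq 0 n).
Definition tjurina_gens (n : nat) (f : series) : list series :=
  f :: jacobian_gens n f.

Definition milnor_number (n : nat) (f : series) (mu : nat) : Prop :=
  quot_dim n (jacobian_gens n f) mu.
Definition tjurina_number (n : nat) (f : series) (tau : nat) : Prop :=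
  quot_dim n (tjurina_gens n f) tau.

(** origin is a critical point: f(0)=0 handled separately; all first partials vanish at 0 *)
Definition critical_at_origin (n : nat) (f : series) : Prop :=
  forall i : nat, (i < n)%nat -> f (munit n i) = C0.

(** isolated critical point at 0 (for a convergent germ with 0 critical):
    the Milnor algebra S/J_f is finite dimensional *)
Definition isolated_critical_point (n : nat) (f : series) : Prop :=
  critical_at_origin n f /\ exists mu : nat, milnor_number n f mu.

(* Main.v *)
From Stdlib Require Import Reals List Arith Lra Lia Psatz Setoid Ring Field FunctionalExtensionality Classical.
Require Import Defs.
Import ListNotations.
Open Scope R_scope.

Lemma C_ext (a b : C) : re a = re b -> im a = im b -> a = b.
Proof. destruct a, b; simpl; intros; subst; reflexivity. Qed.
Definition Csub (a b : C) : C := Cadd a (Copp b).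
Lemma C_ring : ring_theory C0 C1 Cadd Cmul Csub Copp (@eq C).
Proof.
  constructor; intros; apply C_ext; destruct x; try destruct y; try destruct z;
  unfold Cadd, Cmul, Csub, Copp, C0, C1; simpl; ring.
Qed.
Add Ring Cring : C_ring.

Lemma Csum_app l1 l2 : Csum (l1 ++ l2) = Cadd (Csum l1) (Csum l2).
Proof. induction l1; simpl; [ring | rewrite IHl1; ring]. Qed.

Lemma Csum_flat_map {A B} (h : A -> list B) (F : B -> C) l :
  Csum (map F (flat_map h l)) = Csum (map (fun x => Csum (map F (h x))) l).
Proof. induction l; simpl; auto. rewrite map_app, Csum_app, IHl; auto. Qed.

Lemma Csum_map_add {A} (F G : A -> C) l :
  Csum (map (fun x => Cadd (F x) (G x)) l) = Cadd (Csum (map F l)) (Csum (map G l)).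
Proof. induction l; simpl; [ring | rewrite IHl; ring]. Qed.

Lemma Csum_map_mull {A} c (F : A -> C) l :
  Csum (map (fun x => Cmul c (F x)) l) = Cmul c (Csum (map F l)).
Proof. induction l; simpl; [ring | rewrite IHl; ring]. Qed.

Lemma Csum_map_mulr {A} c (F : A -> C) l :
  Csum (map (fun x => Cmul (F x) c) l) = Cmul (Csum (map F l)) c.
Proof. induction l; simpl; [ring | rewrite IHl; ring]. Qed.

Lemma Csum_map_ext_in {A} (F G : A -> C) l :
  (forall x, In x l -> F x = G x) -> Csum (map F l) = Csum (map G l).
Proof. intro H; f_equal; apply map_ext_in; auto. Qed.

Lemma Csum_map_zero {A} (F : A -> C) l :
  (forall x, In x l -> F x = C0) -> Csum (map F l) = C0.
Proof. induction l; simpl; intros; auto. rewrite H, IHl; auto. ring. Qed.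

Lemma Csum_exchange {A B} (H : A -> B -> C) l1 l2 :
  Csum (map (fun x => Csum (map (fun y => H x y) l2)) l1) =
  Csum (map (fun y => Csum (map (fun x => H x y) l1)) l2).
Proof.
  induction l1; simpl.
  - symmetry; apply Csum_map_zero; auto.
  - rewrite IHl1, <- Csum_map_add. reflexivity.
Qed.

Definition sumk (k : nat) (F : nat -> C) : C := Csum (map F (seq 0 (S k))).

Lemma sumk_S_l k F : sumk (S k) F = Cadd (F 0%nat) (sumk k (fun j => F (S j))).
Proof. unfold sumk. cbn [seq map Csum]. rewrite <- seq_shift, map_map. reflexivity. Qed.

Lemma sumk_S_r k F : sumk (S k) F = Cadd (sumk k F) (F (S k)).
Proof. unfold sumk. rewrite seq_S, map_app, Csum_app. simpl. ring. Qed.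

Lemma sumk_ext k F G : (forall j, (j <= k)%nat -> F j = G j) -> sumk k F = sumk k G.
Proof. intro H; unfold sumk; apply Csum_map_ext_in; intros x Hx; apply in_seq in Hx; apply H; lia. Qed.

Lemma sumk_add k F G : sumk k (fun j => Cadd (F j) (G j)) = Cadd (sumk k F) (sumk k G).
Proof. unfold sumk; apply Csum_map_add. Qed.

Lemma sumk_rev k F : sumk k (fun j => F (k - j)%nat) = sumk k F.
Proof.
  induction k.
  - reflexivity.
  - rewrite sumk_S_l, sumk_S_r. rewrite Nat.sub_0_r.
    replace (sumk k (fun j => F (S k - S j)%nat)) with (sumk k (fun j => F (k - j)%nat)) by reflexivity.
    rewrite IHk; ring.
Qed.

Lemma sumk_tri k (T : nat -> nat -> nat -> C) :
  sumk k (fun j => sumk (k - j) (fun i => T j i (k - j - i)%nat)) =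
  sumk k (fun m => sumk m (fun j => T j (m - j)%nat (k - m)%nat)).
Proof.
  revert T; induction k; intro T.
  - reflexivity.
  - rewrite sumk_S_l. rewrite sumk_S_l.
    simpl (S k - 0)%nat.
    replace (sumk k (fun j => sumk (S k - S j) (fun i => T (S j) i (S k - S j - i)%nat)))
      with (sumk k (fun j => sumk (k - j) (fun i => T (S j) i (k - j - i)%nat))) by reflexivity.
    rewrite (IHk (fun j => T (S j))).
    rewrite (sumk_ext k (fun j => sumk (S j) (fun j0 => T j0 (S j - j0)%nat (S k - S j)%nat))
       (fun j => Cadd (T 0%nat (S j) (k - j)%nat) (sumk j (fun j0 => T (S j0) (j - j0)%nat (k - j)%nat)))).
    2:{ intros j _. rewrite sumk_S_l. reflexivity. }
    rewrite sumk_add, sumk_S_l.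
    change (sumk 0 (fun j : nat => T j (0 - j)%nat (S k))) with (Cadd (T 0%nat 0%nat (S k)) C0).
    simpl (S k - 0)%nat. change (fun j : nat => T 0%nat (S j) (S k - S j)%nat) with (fun j : nat => T 0%nat (S j) (k - j)%nat). ring.
Qed.

Definition sl (f : series) (j : nat) : series := fun b => f (j :: b).

Lemma smul_slice f g k a :
  smul f g (k :: a) = sumk k (fun j => smul (sl f j) (sl g (k - j)) a).
Proof.
  unfold smul at 1. cbn [boxes]. rewrite Csum_flat_map. unfold sumk.
  apply Csum_map_ext_in. intros j _. rewrite map_map. reflexivity.
Qed.

Lemma smul_nil f g : smul f g [] = Cmul (f []) (g []).
Proof. unfold smul. simpl. ring. Qed.

Lemma boxes_len a b : In b (boxes a) -> length b = length a /\ length (msub a b) = length a.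
Proof.
  revert b; induction a as [|k a IH]; intros b Hb; cbn [boxes] in Hb.
  - destruct Hb as [<-|[]]; auto.
  - apply in_flat_map in Hb as [j [_ Hj]]. apply in_map_iff in Hj as [b' [<- Hb']].
    destruct (IH _ Hb'); simpl; auto.
Qed.

Definition seqeq n := seq_eq n.

Lemma smul_ext n f f' g g' : seq_eq n f f' -> seq_eq n g g' -> seq_eq n (smul f g) (smul f' g').
Proof.
  intros Hf Hg a Ha. unfold smul. apply Csum_map_ext_in. intros b Hb.
  destruct (boxes_len a b Hb). rewrite Hf, Hg; auto; congruence.
Qed.

Lemma smul_comm n f g : seq_eq n (smul f g) (smul g f).
Proof.
  revert f g; induction n; intros f g a Ha.
  - destruct a; [|discriminate]. rewrite !smul_nil; ring.
  - destruct a as [|k a]; [discriminate|]. injection Ha as Ha.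
    rewrite !smul_slice.
    rewrite (sumk_ext k _ (fun j => smul (sl g (k - j)) (sl f (k - (k - j))) a)).
    2:{ intros j Hj. rewrite IHn by auto. do 3 f_equal. lia. }
    apply (sumk_rev k (fun i => smul (sl g i) (sl f (k - i)) a)).
Qed.

Lemma smul_sadd_r f g h a : smul f (sadd g h) a = Cadd (smul f g a) (smul f h a).
Proof. unfold smul, sadd. rewrite <- Csum_map_add. apply Csum_map_ext_in; intros; ring. Qed.
Lemma smul_sadd_l f g h a : smul (sadd f g) h a = Cadd (smul f h a) (smul g h a).
Proof. unfold smul, sadd. rewrite <- Csum_map_add. apply Csum_map_ext_in; intros; ring. Qed.

Lemma smul_sum_r {A} f (G : A -> series) l a :
  smul f (fun b => Csum (map (fun i => G i b) l)) a = Csum (map (fun i => smul f (G i) a) l).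
Proof.
  unfold smul. rewrite <- Csum_exchange. apply Csum_map_ext_in; intros.
  rewrite <- Csum_map_mull. reflexivity.
Qed.
Lemma smul_sum_l {A} (G : A -> series) h l a :
  smul (fun b => Csum (map (fun i => G i b) l)) h a = Csum (map (fun i => smul (G i) h a) l).
Proof.
  unfold smul. rewrite <- Csum_exchange. apply Csum_map_ext_in; intros.
  rewrite <- Csum_map_mulr. reflexivity.
Qed.

Lemma smul_assoc n f g h : seq_eq n (smul f (smul g h)) (smul (smul f g) h).
Proof.
  revert f g h; induction n; intros f g h a Ha.
  - destruct a; [|discriminate]. rewrite !smul_nil; ring.
  - destruct a as [|k a]; [discriminate|]. injection Ha as Ha.
    rewrite !smul_slice.
    assert (E1 : forall m, sl (smul g h) m = fun b => sumk m (fun i => smul (sl g i) (sl h (m - i)) b)).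
    { intro m. unfold sl at 1. apply functional_extensionality. intro b.
      apply smul_slice. }
    assert (E2 : forall m, sl (smul f g) m = fun b => sumk m (fun i => smul (sl f i) (sl g (m - i)) b)).
    { intro m. unfold sl at 1. apply functional_extensionality. intro b.
      apply smul_slice. }
    rewrite (sumk_ext k _ (fun j => sumk (k - j) (fun i =>
        smul (smul (sl f j) (sl g i)) (sl h (k - j - i)) a))).
    2:{ intros j _. rewrite E1. unfold sumk at 1. rewrite smul_sum_r. apply Csum_map_ext_in.
        intros i _. apply IHn; auto. }
    rewrite (sumk_tri k (fun j i l => smul (smul (sl f j) (sl g i)) (sl h l) a)).
    apply sumk_ext. intros m _. rewrite E2. unfold sumk at 2. rewrite smul_sum_l. reflexivity.
Qed.

Lemma smul_zero_l f g a : (forall b, f b = C0) -> smul f g a = C0.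
Proof. intro H. unfold smul. apply Csum_map_zero. intros. rewrite H. ring. Qed.

Lemma smul_one_l g a : smul sone g a = g a.
Proof.
  revert g; induction a as [|k a IH]; intro g.
  - rewrite smul_nil. unfold sone. simpl. ring.
  - rewrite smul_slice. destruct k.
    + unfold sumk. simpl. change (sl sone 0) with sone. rewrite IH. unfold sl. ring.
    + rewrite sumk_S_l. rewrite (sumk_ext k _ (fun _ => C0)).
      2:{ intros j _. apply smul_zero_l. intro b. reflexivity. }
      unfold sumk at 1; rewrite (Csum_map_zero (fun _ => C0)) by auto.
      simpl. change (sl sone 0) with sone. rewrite IH. unfold sl. ring.
Qed.

Definition ssub f g := sadd f (sopp g).

Lemma S_ring : ring_theory szero sone sadd smul ssub sopp (@eq series).
Proof.
  constructor; intros; apply functional_extensionality; intro a;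
  unfold sadd, ssub, sopp, szero; try ring.
  - apply smul_one_l.
  - apply (smul_comm (length a)); auto.
  - apply (smul_assoc (length a)); auto.
  - apply smul_sadd_l.
  - reflexivity.
Qed.
Add Ring Sring : S_ring.

Definition norm1 (a : C) : R := Rabs (re a) + Rabs (im a).

Lemma norm1_pos a : 0 <= norm1 a.
Proof. unfold norm1. pose proof (Rabs_pos (re a)); pose proof (Rabs_pos (im a)); lra. Qed.

Lemma Rabs_sq x : Rabs x * Rabs x = x * x.
Proof. unfold Rabs; destruct (Rcase_abs x); ring. Qed.

Lemma Cabs_le_norm1 a : Cabs a <= norm1 a.
Proof.
  unfold Cabs, norm1. rewrite <- (sqrt_square (Rabs (re a) + Rabs (im a))).
  - apply sqrt_le_1_alt. pose proof (Rabs_sq (re a)); pose proof (Rabs_sq (im a)).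
    pose proof (Rabs_pos (re a)); pose proof (Rabs_pos (im a)). nra.
  - pose proof (Rabs_pos (re a)); pose proof (Rabs_pos (im a)). lra.
Qed.

Lemma norm1_le_Cabs a : norm1 a <= 2 * Cabs a.
Proof.
  unfold Cabs, norm1.
  assert (H1 : Rabs (re a) <= sqrt (re a * re a + im a * im a)).
  { rewrite <- sqrt_Rsqr_abs. apply sqrt_le_1_alt. unfold Rsqr. nra. }
  assert (H2 : Rabs (im a) <= sqrt (re a * re a + im a * im a)).
  { rewrite <- sqrt_Rsqr_abs. apply sqrt_le_1_alt. unfold Rsqr. nra. }
  lra.
Qed.

Lemma norm1_add a b : norm1 (Cadd a b) <= norm1 a + norm1 b.
Proof. unfold norm1, Cadd; simpl. pose proof (Rabs_triang (re a) (re b)); pose proof (Rabs_triang (im a) (im b)). lra. Qed.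

Lemma norm1_opp a : norm1 (Copp a) = norm1 a.
Proof. unfold norm1, Copp; simpl. rewrite !Rabs_Ropp. reflexivity. Qed.

Lemma norm1_mul a b : norm1 (Cmul a b) <= norm1 a * norm1 b.
Proof.
  unfold norm1, Cmul; simpl.
  pose proof (Rabs_triang (re a * re b) (- (im a * im b))).
  pose proof (Rabs_triang (re a * im b) (im a * re b)).
  rewrite Rabs_Ropp in H. rewrite !Rabs_mult in H, H0.
  pose proof (Rabs_pos (re a)); pose proof (Rabs_pos (im a));
  pose proof (Rabs_pos (re b)); pose proof (Rabs_pos (im b)). unfold Rminus. nra.
Qed.

Lemma norm1_Csum {A} (F : A -> C) l B :
  (forall x, In x l -> norm1 (F x) <= B) -> norm1 (Csum (map F l)) <= INR (length l) * B.
Proof.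
  induction l; intro H.
  - unfold norm1; simpl. rewrite Rabs_R0. lra.
  - change (Csum (map F (a::l))) with (Cadd (F a) (Csum (map F l))).
    change (length (a::l)) with (S (length l)).
    eapply Rle_trans; [apply norm1_add|]. rewrite S_INR.
    assert (norm1 (F a) <= B) by (apply H; left; auto).
    assert (norm1 (Csum (map F l)) <= INR (length l) * B) by (apply IHl; intros; apply H; right; auto).
    rewrite Rmult_plus_distr_r. lra.
Qed.

Definition conv1 (n : nat) (f : series) : Prop :=
  exists M r : R, 0 < r /\ forall a : mindex, length a = n -> norm1 (f a) * r ^ (mdeg a) <= M.

Lemma conv_conv1 n f : convergent n f <-> conv1 n f.
Proof.
  split; intros [M [r [Hr H]]].
  - exists (2 * M), r; split; auto. intros a Ha. specialize (H a Ha).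
    pose proof (norm1_le_Cabs (f a)). pose proof (pow_le r (mdeg a) (Rlt_le _ _ Hr)). nra.
  - exists M, r; split; auto. intros a Ha. specialize (H a Ha).
    pose proof (Cabs_le_norm1 (f a)). pose proof (pow_le r (mdeg a) (Rlt_le _ _ Hr)). nra.
Qed.

Lemma conv1_M_pos n f M r : 0 < r -> (forall a : mindex, length a = n -> norm1 (f a) * r ^ (mdeg a) <= M) -> 0 <= M.
Proof.
  intros Hr H. specialize (H (repeat 0%nat n) (repeat_length _ _)).
  pose proof (norm1_pos (f (repeat 0%nat n))). pose proof (pow_le r (mdeg (repeat 0%nat n)) (Rlt_le _ _ Hr)). nra.
Qed.

Lemma conv1_shrink n f M r r' : 0 < r' <= r -> (forall a : mindex, length a = n -> norm1 (f a) * r ^ (mdeg a) <= M) ->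
  forall a : mindex, length a = n -> norm1 (f a) * r' ^ (mdeg a) <= M.
Proof.
  intros Hr H a Ha. specialize (H a Ha). pose proof (norm1_pos (f a)).
  assert (r' ^ mdeg a <= r ^ mdeg a) by (apply pow_incr; lra). nra.
Qed.

Lemma conv1_add n f g : conv1 n f -> conv1 n g -> conv1 n (sadd f g).
Proof.
  intros [M1 [r1 [H1 B1]]] [M2 [r2 [H2 B2]]].
  exists (M1 + M2), (Rmin r1 r2). split; [apply Rmin_glb_lt; auto|].
  intros a Ha.
  pose proof (conv1_shrink n f M1 r1 (Rmin r1 r2) ltac:(split; [apply Rmin_glb_lt; auto| apply Rmin_l]) B1 a Ha).
  pose proof (conv1_shrink n g M2 r2 (Rmin r1 r2) ltac:(split; [apply Rmin_glb_lt; auto| apply Rmin_r]) B2 a Ha).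
  unfold sadd. pose proof (norm1_add (f a) (g a)).
  pose proof (pow_le (Rmin r1 r2) (mdeg a) ltac:(left; apply Rmin_glb_lt; auto)). nra.
Qed.

Lemma conv1_opp n f : conv1 n f -> conv1 n (sopp f).
Proof. intros [M [r [H B]]]. exists M, r; split; auto. intros a Ha. unfold sopp. rewrite norm1_opp. auto. Qed.

Lemma conv1_zero n : conv1 n szero.
Proof. exists 0, 1; split; [lra|]. intros. unfold szero, norm1; simpl. rewrite Rabs_R0. lra. Qed.

Lemma conv1_one n : conv1 n sone.
Proof.
  exists 1, 1; split; [lra|]. intros. rewrite pow1. unfold sone.
  destruct (is_zero_mi a); unfold norm1; simpl; rewrite ?Rabs_R0, ?Rabs_R1; lra.
Qed.

Lemma length_flat_cons (L : list mindex) l :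
  length (flat_map (fun j => map (cons j) L) l) = (length l * length L)%nat.
Proof. induction l; simpl; auto. rewrite length_app, length_map, IHl. reflexivity. Qed.

Lemma boxes_length a : (length (boxes a) <= 2 ^ mdeg a)%nat.
Proof.
  induction a as [|k a IH]; cbn [boxes mdeg fold_right]; auto.
  rewrite length_flat_cons, length_seq, Nat.pow_add_r.
  apply Nat.mul_le_mono; auto.
  clear. induction k; simpl; lia.
Qed.

Lemma boxes_mdeg a b : In b (boxes a) -> (mdeg b + mdeg (msub a b))%nat = mdeg a.
Proof.
  revert b; induction a as [|k a IH]; intros b Hb; cbn [boxes] in Hb.
  - destruct Hb as [<-|[]]; auto.
  - apply in_flat_map in Hb as [j [Hj Hj']]. apply in_map_iff in Hj' as [b' [<- Hb']].
    apply in_seq in Hj. specialize (IH _ Hb'). simpl. lia.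
Qed.

Lemma conv1_mul n f g : conv1 n f -> conv1 n g -> conv1 n (smul f g).
Proof.
  intros [M1 [r1 [H1 B1]]] [M2 [r2 [H2 B2]]].
  set (rho := Rmin r1 r2).
  assert (Hrho : 0 < rho) by (apply Rmin_glb_lt; auto).
  pose proof (conv1_shrink n f M1 r1 rho ltac:(split; [auto| apply Rmin_l]) B1) as C1.
  pose proof (conv1_shrink n g M2 r2 rho ltac:(split; [auto| apply Rmin_r]) B2) as C2.
  pose proof (conv1_M_pos n f M1 r1 H1 B1) as P1.
  pose proof (conv1_M_pos n g M2 r2 H2 B2) as P2.
  exists (M1 * M2), (rho / 2). split; [lra|].
  intros a Ha. unfold smul.
  pose proof (pow_lt rho (mdeg a) Hrho) as Hp.
  assert (Hsum : norm1 (Csum (map (fun b => Cmul (f b) (g (msub a b))) (boxes a)))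
                 <= INR (length (boxes a)) * (M1 * M2 / rho ^ mdeg a)).
  { apply norm1_Csum. intros b Hb. destruct (boxes_len a b Hb) as [L1 L2].
    pose proof (boxes_mdeg a b Hb) as Hd.
    specialize (C1 b ltac:(congruence)). specialize (C2 (msub a b) ltac:(congruence)).
    eapply Rle_trans; [apply norm1_mul|].
    apply (Rmult_le_reg_r (rho ^ mdeg a)); auto.
    replace (M1 * M2 / rho ^ mdeg a * rho ^ mdeg a) with (M1 * M2) by (field; lra).
    rewrite <- Hd, pow_add.
    pose proof (norm1_pos (f b)); pose proof (norm1_pos (g (msub a b))).
    pose proof (pow_le rho (mdeg b) (Rlt_le _ _ Hrho)).
    pose proof (pow_le rho (mdeg (msub a b)) (Rlt_le _ _ Hrho)).
    replace (norm1 (f b) * norm1 (g (msub a b)) * (rho ^ mdeg b * rho ^ mdeg (msub a b))) with ((norm1 (f b) * rho ^ mdeg b) * (norm1 (g (msub a b)) * rho ^ mdeg (msub a b))) by ring. apply Rmult_le_compat; auto; apply Rmult_le_pos; auto. }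
  assert (HL : INR (length (boxes a)) <= 2 ^ mdeg a).
  { replace 2 with (INR 2) by (simpl; ring). rewrite <- pow_INR. apply le_INR. apply boxes_length. }
  replace ((rho / 2) ^ mdeg a) with (rho ^ mdeg a / 2 ^ mdeg a).
  2:{ unfold Rdiv. rewrite Rpow_mult_distr, pow_inv. reflexivity. }
  pose proof (pow_lt 2 (mdeg a) ltac:(lra)) as H2p.
  pose proof (norm1_pos (Csum (map (fun b => Cmul (f b) (g (msub a b))) (boxes a)))).
  assert (0 <= M1 * M2 / rho ^ mdeg a) by (unfold Rdiv; apply Rmult_le_pos; [nra | left; apply Rinv_0_lt_compat; auto]).
  assert (E : norm1 (Csum (map (fun b => Cmul (f b) (g (msub a b))) (boxes a))) <= 2 ^ mdeg a * (M1 * M2 / rho ^ mdeg a)) by nra.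
  apply Rle_trans with (2 ^ mdeg a * (M1 * M2 / rho ^ mdeg a) * (rho ^ mdeg a / 2 ^ mdeg a)).
  - apply Rmult_le_compat_r; auto. unfold Rdiv; apply Rmult_le_pos; [lra| left; apply Rinv_0_lt_compat; auto].
  - right; field; lra.
Qed.

Definition sconst (c : C) : series := sscale c sone.

Lemma smul_sscale_l c f g : smul (sscale c f) g = sscale c (smul f g).
Proof.
  apply functional_extensionality; intro a. unfold smul, sscale.
  rewrite <- Csum_map_mull. apply Csum_map_ext_in; intros; ring.
Qed.

Lemma sscale_sconst c f : sscale c f = smul (sconst c) f.
Proof. unfold sconst. rewrite smul_sscale_l. f_equal. ring. Qed.

Lemma sconst_add c d : sconst (Cadd c d) = sadd (sconst c) (sconst d).
Proof. apply functional_extensionality; intro a. unfold sconst, sscale, sadd. ring. Qed.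
Lemma sconst_mul c d : sconst (Cmul c d) = smul (sconst c) (sconst d).
Proof. rewrite <- sscale_sconst. apply functional_extensionality; intro a. unfold sconst, sscale. ring. Qed.
Lemma sconst_0 : sconst C0 = szero.
Proof. apply functional_extensionality; intro a. unfold sconst, sscale, szero. ring. Qed.
Lemma sconst_opp c : sconst (Copp c) = sopp (sconst c).
Proof. apply functional_extensionality; intro a. unfold sconst, sscale, sopp. ring. Qed.

Lemma conv1_scale n c f : conv1 n f -> conv1 n (sscale c f).
Proof.
  intros [M [r [H B]]]. exists (norm1 c * M), r; split; auto. intros a Ha.
  unfold sscale. pose proof (norm1_mul c (f a)). specialize (B a Ha).
  pose proof (norm1_pos c). pose proof (norm1_pos (f a)). pose proof (pow_le r (mdeg a) (Rlt_le _ _ H)). nra.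
Qed.

Lemma conv_add n f g : convergent n f -> convergent n g -> convergent n (sadd f g).
Proof. rewrite !conv_conv1. apply conv1_add. Qed.
Lemma conv_mul n f g : convergent n f -> convergent n g -> convergent n (smul f g).
Proof. rewrite !conv_conv1. apply conv1_mul. Qed.
Lemma conv_opp n f : convergent n f -> convergent n (sopp f).
Proof. rewrite !conv_conv1. apply conv1_opp. Qed.
Lemma conv_scale n c f : convergent n f -> convergent n (sscale c f).
Proof. rewrite !conv_conv1. apply conv1_scale. Qed.
Lemma conv_zero n : convergent n szero.
Proof. rewrite conv_conv1. apply conv1_zero. Qed.
Lemma conv_one n : convergent n sone.
Proof. rewrite conv_conv1. apply conv1_one. Qed.
Lemma conv_sub n f g : convergent n f -> convergent n g -> convergent n (ssub f g).
Proof. intros; apply conv_add; auto; apply conv_opp; auto. Qed.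
Lemma conv_const n c : convergent n (sconst c).
Proof. apply conv_scale, conv_one. Qed.
Lemma conv_pow n f k : convergent n f -> convergent n (spow f k).
Proof. intro H; induction k; simpl; [apply conv_one | apply conv_mul; auto]. Qed.

Lemma conv_lincomb n cs es : Forall (convergent n) es -> convergent n (lincomb cs es).
Proof.
  revert es; induction cs; intros es H; unfold lincomb; simpl; [apply conv_zero|].
  destruct es; simpl; [apply conv_zero|]. inversion H; subst.
  apply conv_add; [apply conv_scale; auto | apply IHcs; auto].
Qed.

Definition comb (hs gens : list series) : series :=
  fold_right sadd szero (map (fun p => smul (fst p) (snd p)) (combine hs gens)).

Lemma seq_eq_refl n f : seq_eq n f f.
Proof. intros a _; reflexivity. Qed.
Lemma seq_eq_sym n f g : seq_eq n f g -> seq_eq n g f.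
Proof. intros H a Ha; symmetry; auto. Qed.
Lemma seq_eq_trans n f g h : seq_eq n f g -> seq_eq n g h -> seq_eq n f h.
Proof. intros H1 H2 a Ha; rewrite H1; auto. Qed.
Lemma sadd_ext n f f' g g' : seq_eq n f f' -> seq_eq n g g' -> seq_eq n (sadd f g) (sadd f' g').
Proof. intros H1 H2 a Ha; unfold sadd; rewrite H1, H2; auto. Qed.

Lemma ideal_ext n G g g' : seq_eq n g g' -> in_ideal n G g -> in_ideal n G g'.
Proof.
  intros E [hs [L [F H]]]. exists hs; repeat split; auto.
  eapply seq_eq_trans; [apply seq_eq_sym, E| apply H].
Qed.

Lemma ideal_eq n G g g' : g = g' -> in_ideal n G g -> in_ideal n G g'.
Proof. intros ->; auto. Qed.

Lemma ideal_zero n G : in_ideal n G szero.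
Proof.
  exists (repeat szero (length G)). rewrite repeat_length. repeat split; auto.
  - apply Forall_forall. intros x Hx. apply repeat_spec in Hx; subst. apply conv_zero.
  - assert (E : comb (repeat szero (length G)) G = szero).
    { induction G; unfold comb in *; simpl; auto. rewrite IHG. ring. }
    unfold comb in E. rewrite E. apply seq_eq_refl.
Qed.

Lemma comb_add G : forall hs1 hs2, length hs1 = length G -> length hs2 = length G ->
  comb (map (fun p => sadd (fst p) (snd p)) (combine hs1 hs2)) G = sadd (comb hs1 G) (comb hs2 G).
Proof.
  induction G; intros [|h1 hs1] [|h2 hs2]; simpl; intros L1 L2; try discriminate.
  - unfold comb; simpl. ring.
  - unfold comb in *; simpl. injection L1 as L1; injection L2 as L2.
    rewrite (IHG hs1 hs2 L1 L2). ring.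
Qed.

Lemma ideal_add n G g1 g2 : in_ideal n G g1 -> in_ideal n G g2 -> in_ideal n G (sadd g1 g2).
Proof.
  intros [hs1 [L1 [F1 H1]]] [hs2 [L2 [F2 H2]]].
  exists (map (fun p => sadd (fst p) (snd p)) (combine hs1 hs2)). repeat split.
  - rewrite length_map, length_combine. lia.
  - clear -F1 F2. revert hs2 F2; induction F1; intros hs2 F2; simpl; auto.
    destruct hs2; simpl; auto. inversion F2; subst. constructor; auto. apply conv_add; auto.
  - fold (comb (map (fun p => sadd (fst p) (snd p)) (combine hs1 hs2)) G).
    rewrite comb_add by auto. apply sadd_ext; auto.
Qed.

Lemma comb_mul h G : forall hs, comb (map (smul h) hs) G = smul h (comb hs G).
Proof.
  induction G; intros [|h1 hs]; unfold comb in *; simpl; try ring.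
  rewrite IHG. ring.
Qed.

Lemma ideal_mul n G h g : convergent n h -> in_ideal n G g -> in_ideal n G (smul h g).
Proof.
  intros Ch [hs [L [F H]]]. exists (map (smul h) hs). repeat split.
  - rewrite length_map; auto.
  - apply Forall_map. eapply Forall_impl; [|exact F]. intros; apply conv_mul; auto.
  - fold (comb (map (smul h) hs) G). rewrite comb_mul. apply smul_ext; auto. apply seq_eq_refl.
Qed.

Lemma ideal_scale n G c g : in_ideal n G g -> in_ideal n G (sscale c g).
Proof. intro H. rewrite sscale_sconst. apply ideal_mul; auto. apply conv_const. Qed.

Lemma ideal_opp n G g : in_ideal n G g -> in_ideal n G (sopp g).
Proof.
  intro H. apply (ideal_eq n G (smul (sopp sone) g)); [ring|].
  apply ideal_mul; auto. apply conv_opp, conv_one.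
Qed.

Lemma ideal_sub n G g1 g2 : in_ideal n G g1 -> in_ideal n G g2 -> in_ideal n G (ssub g1 g2).
Proof. intros; apply ideal_add; auto; apply ideal_opp; auto. Qed.

Lemma ideal_lincomb n G cs es : Forall (in_ideal n G) es -> in_ideal n G (lincomb cs es).
Proof.
  revert es; induction cs; intros es H; unfold lincomb; simpl; [apply ideal_zero|].
  destruct es; simpl; [apply ideal_zero|]. inversion H; subst.
  apply ideal_add; [apply ideal_scale; auto | apply IHcs; auto].
Qed.

Lemma tjurina_split n f J g : in_ideal n (f :: J) g ->
  exists h, convergent n h /\ in_ideal n J (ssub g (smul h f)).
Proof.
  intros [hs [L [F H]]]. destruct hs as [|h hs]; [discriminate|].
  inversion F; subst. injection L as L.
  exists h; split; auto. exists hs; repeat split; auto.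
  intros a Ha. simpl in H. unfold ssub. unfold sadd at 1. rewrite (H a Ha). unfold sadd at 1, sopp. ring.
Qed.

Definition Cinv (p : C) : C :=
  mkC (re p / (re p * re p + im p * im p)) (- im p / (re p * re p + im p * im p)).

Lemma Cinv_l p : p <> C0 -> Cmul (Cinv p) p = C1.
Proof.
  intro H. assert (Hd : re p * re p + im p * im p <> 0).
  { intro E. apply H. destruct p; unfold C0; simpl in *. f_equal; nra. }
  apply C_ext; unfold Cinv, Cmul, C1; simpl; field; auto.
Qed.

Lemma C1_neq_C0 : C1 <> C0.
Proof. unfold C1, C0. intro E; injection E; lra. Qed.

Definition dot (c : list C) (rows : list (nat -> C)) (j : nat) : C :=
  Csum (map (fun p => Cmul (fst p) (snd p j)) (combine c rows)).

Lemma dot_app c1 c2 r1 r2 j : length c1 = length r1 ->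
  dot (c1 ++ c2) (r1 ++ r2) j = Cadd (dot c1 r1 j) (dot c2 r2 j).
Proof.
  revert r1; induction c1; intros [|r r1] L; simpl in *; try discriminate.
  - unfold dot; simpl. ring.
  - injection L as L. unfold dot in *; simpl. rewrite IHc1 by auto. ring.
Qed.

Lemma dot_zero_rows c rows j : (forall r, In r rows -> r j = C0) -> dot c rows j = C0.
Proof.
  intro H. unfold dot. apply Csum_map_zero. intros [x r] Hx. simpl.
  apply in_combine_r in Hx. rewrite H by auto. ring.
Qed.

Lemma dot_elim c R (r : nat -> C) K j :
  dot c (map (fun s => fun j => Cadd (s (S j)) (Cmul (Cmul (s 0%nat) K) (r (S j)))) R) j =
  Cadd (dot c R (S j)) (Cmul (Cmul (dot c R 0%nat) K) (r (S j))).
Proof.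
  revert R; induction c; intros [|s R]; unfold dot in *; simpl; try ring.
  rewrite IHc. ring.
Qed.

Lemma dot_shift c R j : dot c (map (fun s => fun j => s (S j)) R) j = dot c R (S j).
Proof.
  revert R; induction c; intros [|s R]; unfold dot in *; simpl; try ring.
  rewrite IHc. ring.
Qed.

Lemma dependence : forall m (rows : list (nat -> C)), (m < length rows)%nat ->
  exists c, length c = length rows /\ ~ Forall (fun x => x = C0) c /\
    forall j, (j < m)%nat -> dot c rows j = C0.
Proof.
  induction m; intros rows Hl.
  - exists (C1 :: repeat C0 (length rows - 1)). split; [simpl; rewrite repeat_length; lia|].
    split; [|intros; lia]. intro F; inversion F; apply C1_neq_C0; auto.
  - destruct (classic (exists r, In r rows /\ r 0%nat <> C0)) as [[r [Hr Hr0]] | Hno].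
    + apply in_split in Hr as [R1 [R2 ->]].
      set (K := Copp (Cinv (r 0%nat))).
      set (newrows := map (fun s => fun j => Cadd (s (S j)) (Cmul (Cmul (s 0%nat) K) (r (S j)))) (R1 ++ R2)).
      destruct (IHm newrows) as [c [Lc [Nc Dc]]].
      { unfold newrows. rewrite length_map, length_app. rewrite length_app in Hl. simpl in Hl. lia. }
      unfold newrows in Lc. rewrite length_map in Lc.
      set (c0 := Cmul (dot c (R1 ++ R2) 0%nat) K).
      set (c1 := firstn (length R1) c). set (c2 := skipn (length R1) c).
      assert (Ec : c = c1 ++ c2) by (symmetry; apply firstn_skipn).
      assert (L1 : length c1 = length R1) by (unfold c1; rewrite length_firstn; rewrite length_app in Lc; lia).
      clearbody c1 c2.
      assert (Hd : forall j, dot (c1 ++ c0 :: c2) (R1 ++ r :: R2) j = Cadd (Cmul c0 (r j)) (dot c (R1 ++ R2) j)).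
      { intro j. rewrite dot_app by auto. rewrite Ec, dot_app by auto. unfold dot at 2; simpl. fold (dot c2 R2 j). ring. }
      exists (c1 ++ c0 :: c2). split; [|split].
      * rewrite !length_app; simpl. rewrite Ec, length_app in Lc. rewrite length_app in Lc. lia.
      * intro F. apply Nc. rewrite Ec. apply Forall_app in F as [F1 F2]. inversion F2; subst.
        apply Forall_app; auto.
      * intros j Hj. rewrite Hd. destruct j.
        -- unfold c0, K. replace (Cmul (Cmul (dot c (R1 ++ R2) 0) (Copp (Cinv (r 0%nat)))) (r 0%nat))
             with (Copp (Cmul (dot c (R1 ++ R2) 0) (Cmul (Cinv (r 0%nat)) (r 0%nat)))) by ring.
           rewrite Cinv_l by auto. ring.
        -- specialize (Dc j ltac:(lia)). unfold newrows in Dc. rewrite dot_elim in Dc. unfold c0.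
           rewrite <- Dc. ring.
    + destruct (IHm (map (fun s => fun j => s (S j)) rows)) as [c [Lc [Nc Dc]]].
      { rewrite length_map. lia. }
      rewrite length_map in Lc. exists c. split; auto. split; auto.
      intros j Hj. destruct j.
      * apply dot_zero_rows. intros r Hr. destruct (classic (r 0%nat = C0)); auto.
        exfalso; apply Hno; eauto.
      * rewrite <- dot_shift. apply Dc. lia.
Qed.

Definition Lc (l : list nat) (W : list series) (a : nat -> C) : series := lincomb (map a l) W.

Lemma Lc_add l W a b : Lc l W (fun j => Cadd (a j) (b j)) = sadd (Lc l W a) (Lc l W b).
Proof.
  revert W; induction l; intros [|w W]; unfold Lc, lincomb in *; simpl; try ring.
  rewrite IHl, !sscale_sconst, sconst_add. ring.
Qed.
Lemma Lc_scale l W k a : Lc l W (fun j => Cmul k (a j)) = smul (sconst k) (Lc l W a).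
Proof.
  revert W; induction l; intros [|w W]; unfold Lc, lincomb in *; simpl; try ring.
  rewrite IHl, !sscale_sconst, sconst_mul. ring.
Qed.
Lemma Lc_zero l W : Lc l W (fun _ => C0) = szero.
Proof.
  revert W; induction l; intros [|w W]; unfold Lc, lincomb in *; simpl; try ring.
  rewrite IHl, !sscale_sconst, sconst_0. ring.
Qed.
Lemma Lc_ext l W a b : (forall j, In j l -> a j = b j) -> Lc l W a = Lc l W b.
Proof. intro H. unfold Lc. f_equal. apply map_ext_in; auto. Qed.

Lemma map_nth_seq' (cs : list C) d : map (fun j => nth j cs d) (seq 0 (length cs)) = cs.
Proof.
  induction cs; simpl; auto. f_equal. rewrite <- seq_shift, map_map. simpl. exact IHcs.
Qed.

Lemma lincomb_nth cs W : lincomb cs W = Lc (seq 0 (length cs)) W (fun j => nth j cs C0).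
Proof. unfold Lc. rewrite map_nth_seq'. reflexivity. Qed.

Lemma lincomb_dot l W c rows : length c = length rows ->
  lincomb c (map (Lc l W) rows) = Lc l W (dot c rows).
Proof.
  revert rows; induction c; intros [|r rows] L; simpl in *; try discriminate.
  - unfold lincomb, dot; simpl. symmetry. apply Lc_zero.
  - injection L as L. unfold lincomb in *; simpl. rewrite IHc by auto.
    change (dot (a :: c) (r :: rows)) with (fun j => Cadd (Cmul a (r j)) (dot c rows j)).
    rewrite (Lc_add l W (fun j => Cmul a (r j)) (dot c rows)), Lc_scale, sscale_sconst. reflexivity.
Qed.

Lemma lincomb_app cs1 cs2 W1 W2 : length cs1 = length W1 ->
  lincomb (cs1 ++ cs2) (W1 ++ W2) = sadd (lincomb cs1 W1) (lincomb cs2 W2).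
Proof.
  revert W1; induction cs1; intros [|w W1] L; simpl in *; try discriminate.
  - unfold lincomb; simpl. ring.
  - injection L as L. unfold lincomb in *; simpl. rewrite IHcs1 by auto. ring.
Qed.

Lemma lincomb_mul p cs ts : lincomb cs (map (smul p) ts) = smul p (lincomb cs ts).
Proof.
  revert ts; induction cs; intros [|t ts]; unfold lincomb in *; simpl; try ring.
  rewrite IHcs, !sscale_sconst. ring.
Qed.

Definition Wk (f : series) (ts : list series) (k : nat) : list series :=
  flat_map (fun l => map (smul (spow f l)) ts) (seq 0 k).

Lemma Wk_S f ts k : Wk f ts (S k) = Wk f ts k ++ map (smul (spow f k)) ts.
Proof. unfold Wk. rewrite seq_S, flat_map_app. simpl. rewrite app_nil_r. reflexivity. Qed.

Lemma Wk_length f ts k : length (Wk f ts k) = (k * length ts)%nat.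
Proof.
  induction k; [reflexivity|]. rewrite Wk_S, length_app, length_map, IHk. lia.
Qed.

Lemma span_k n f J ts :
  convergent n f ->
  (forall g, convergent n g -> exists cs, length cs = length ts /\
      in_ideal n (f :: J) (sadd g (sopp (lincomb cs ts)))) ->
  forall k g, convergent n g -> exists cs h, length cs = length (Wk f ts k) /\ convergent n h /\
      in_ideal n J (ssub (ssub g (lincomb cs (Wk f ts k))) (smul (spow f k) h)).
Proof.
  intros Cf Tj. induction k; intros g Cg.
  - exists [], g. split; [reflexivity|]. split; auto.
    apply (ideal_eq n J szero); [|apply ideal_zero].
    unfold Wk, lincomb; simpl. ring.
  - destruct (IHk g Cg) as [cs [h [Lcs [Ch Hi]]]].
    destruct (Tj h Ch) as [c [Lc' Hc]].
    destruct (tjurina_split n f J _ Hc) as [h' [Ch' Hj]].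
    exists (cs ++ c), h'. split; [rewrite Wk_S, !length_app, length_map; lia|]. split; auto.
    apply (ideal_eq n J (sadd (ssub (ssub g (lincomb cs (Wk f ts k))) (smul (spow f k) h))
                             (smul (spow f k) (ssub (sadd h (sopp (lincomb c ts))) (smul h' f))))).
    + rewrite Wk_S, lincomb_app, lincomb_mul by auto. simpl spow. unfold ssub. ring.
    + apply ideal_add; auto. apply ideal_mul; auto. apply conv_pow; auto.
Qed.

Lemma build_rows n J W (es : list series) :
  (forall g, convergent n g -> exists cs, length cs = length W /\ in_ideal n J (ssub g (lincomb cs W))) ->
  Forall (convergent n) es ->
  exists rows, length rows = length es /\
    Forall2 (fun e r => in_ideal n J (ssub e (Lc (seq 0 (length W)) W r))) es rows.
Proof.
  intros Sp F. induction F.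
  - exists []; auto.
  - destruct IHF as [rows [L F2]]. destruct (Sp x H) as [cs [Lcs Hx]].
    exists ((fun j => nth j cs C0) :: rows). split; [simpl; auto|]. constructor; auto.
    rewrite <- Lcs, <- lincomb_nth. auto.
Qed.

Lemma comb_rows n J l W es rows : Forall2 (fun e r => in_ideal n J (ssub e (Lc l W r))) es rows ->
  forall c, length c = length es ->
  in_ideal n J (ssub (lincomb c es) (lincomb c (map (Lc l W) rows))).
Proof.
  induction 1; intros [|c0 c] L; simpl in *; try discriminate.
  - apply (ideal_eq n J szero); [unfold lincomb; simpl; ring| apply ideal_zero].
  - injection L as L. specialize (IHForall2 c L).
    apply (ideal_eq n J (sadd (sscale c0 (ssub x (Lc l W y)))
                              (ssub (lincomb c l0) (lincomb c (map (Lc l W) l'))))).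
    + unfold lincomb; simpl. rewrite !sscale_sconst. unfold ssub. ring.
    + apply ideal_add; auto. apply ideal_scale; auto.
Qed.

Lemma mu_bound n f J ts es :
  convergent n f ->
  (forall g, convergent n g -> exists cs, length cs = length ts /\
      in_ideal n (f :: J) (sadd g (sopp (lincomb cs ts)))) ->
  in_ideal n J (spow f (n - 1)) ->
  Forall (convergent n) es ->
  (forall cs : list C, length cs = length es -> in_ideal n J (lincomb cs es) -> Forall (fun c => c = C0) cs) ->
  (length es <= (n - 1) * length ts)%nat.
Proof.
  intros Cf Tj Hp Ces Ind.
  set (W := Wk f ts (n - 1)).
  assert (Sp : forall g, convergent n g -> exists cs, length cs = length W /\ in_ideal n J (ssub g (lincomb cs W))).
  { intros g Cg. destruct (span_k n f J ts Cf Tj (n - 1) g Cg) as [cs [h [L [Ch Hi]]]].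
    exists cs; split; auto.
    apply (ideal_eq n J (sadd (ssub (ssub g (lincomb cs W)) (smul (spow f (n - 1)) h)) (smul h (spow f (n - 1))))).
    - unfold ssub. ring.
    - apply ideal_add; auto. apply ideal_mul; auto. }
  destruct (build_rows n J W es Sp Ces) as [rows [Lr F2]].
  destruct (Nat.le_gt_cases (length es) ((n - 1) * length ts)) as [Hle|Hgt]; auto.
  exfalso.
  destruct (dependence (length W) rows) as [c [Lc' [Nc Dc]]].
  { unfold W. rewrite Wk_length. lia. }
  apply Nc. apply Ind; [lia|].
  pose proof (comb_rows n J (seq 0 (length W)) W es rows F2 c ltac:(lia)) as Hc.
  rewrite lincomb_dot in Hc by auto.
  rewrite (Lc_ext _ _ _ (fun _ => C0)) in Hc.
  2:{ intros j Hj. apply in_seq in Hj. apply Dc. lia. }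
  rewrite Lc_zero in Hc.
  eapply (ideal_eq n J); [|exact Hc]. unfold ssub; ring.
Qed.

Theorem mainTheorem3 (n : nat) (f : series) (mu tau : nat) :
  (2 <= n)%nat ->
  convergent n f ->
  f (repeat 0%nat n) = C0 ->
  isolated_critical_point n f ->
  milnor_number n f mu ->
  tjurina_number n f tau ->
  (INR mu / INR tau > INR (n - 1))%R ->
  ~ in_ideal n (jacobian_gens n f) (spow f (n - 1)).
Proof.
  intros Hn Cf _ _ [es [Les [Ces [_ Ind]]]] [ts [Lts [_ [Tj _]]]] Hr Hp.
  assert (Hb : (length es <= (n - 1) * length ts)%nat).
  { apply (mu_bound n f (jacobian_gens n f) ts es Cf); auto.
    - intros g Cg. destruct (Tj g Cg) as [cs [L H]]. exists cs; split; [lia|exact H].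
    - intros cs L H. apply Ind; auto. lia. }
  rewrite Les, Lts in Hb.
  assert (Hn1 : 1 <= INR (n - 1)) by (replace 1 with (INR 1) by reflexivity; apply le_INR; lia).
  destruct tau.
  - simpl in Hr. unfold Rdiv in Hr. rewrite Rinv_0, Rmult_0_r in Hr. lra.
  - assert (Ht : 0 < INR (S tau)) by (apply lt_0_INR; lia).
    apply le_INR in Hb. rewrite mult_INR in Hb.
    apply (Rmult_gt_compat_r (INR (S tau))) in Hr; auto.
    unfold Rdiv in Hr. rewrite Rmult_assoc, Rinv_l, Rmult_1_r in Hr by lra. lra.
Qed.
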